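(* There exist absolute constants $C>0$ and $t_0$ such that for all sufficiently large $n$, every integer $t\ge t_0$ and every integer $s$ with $2t\le s\le n/2$, there exists a graph $G$ on $n$ vertices with independence number $$\alpha(G)\le C\, t\Big(\frac{n}{s}\Big)^{2t/(s-t)}\log (n/t)$$ such that every induced subgraph of $G$ on $s$ vertices contains an independent set of size $t$.
   Context: All logarithms are natural. $\alpha(G)$ denotes the maximum size of an independent set in $G$. The $O(\cdot)$ bound of the paper is expressed via an absolute constant. *)

(* Defs.v *)
From mathcomp Require Import all_boot.
From Stdlib Require Import Reals.

Set Implicit Arguments.
Unset Strict Implicit.
Unset Printing Implicit Defensive.

Definition simple_graph (n : nat) (e : rel 'I_n) : Prop :=
  symmetric e /\ irreflexive e.

Definition independent (n : nat) (e : rel 'I_n) (A : {set 'I_n}) : bool :=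
  [forall x in A, forall y in A, ~~ e x y].

Definition alpha (n : nat) (e : rel 'I_n) : nat :=
  \max_(A : {set 'I_n} | independent e A) #|A|.

(* Main.v *)
Require Import Defs.
From mathcomp Require Import all_boot zify.
Set Implicit Arguments.
Unset Strict Implicit.
Unset Printing Implicit Defensive.

Definition NS n (e : rel 'I_n) (S : {set 'I_n}) u := [set w in S | (w == u) || e u w].
Definition W n (e : rel 'I_n) (S : {set 'I_n}) := \sum_(u in S) #|NS e S u|.

Lemma sub_card (T : finType) j : forall (A : {set T}), j <= #|A| ->
  exists B : {set T}, B \subset A /\ #|B| = j.
Proof.
move=> A; move: {2}#|A| (leqnn #|A|) => k; elim: k A => [|k IH] A hA hj.
  exists A; split => //; lia.
case: (leqP j.+1 #|A|) => hjA; last first.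
  exists A; split => //; lia.
have: 0 < #|A| by lia.
case/card_gt0P => x xA.
have := cardsD1 x A; rewrite xA => hc.
have [B [sB cB]] := IH (A :\ x) ltac:(lia) ltac:(lia).
exists B; split => //; apply: subset_trans sB _; exact: subsetDl.
Qed.

Lemma indep_sub n (e : rel 'I_n) (A B : {set 'I_n}) :
  B \subset A -> independent e A -> independent e B.
Proof.
move=> sBA /forallP hA; apply/forallP => x; apply/implyP => xB.
apply/forallP => y; apply/implyP => yB.
have := hA x; rewrite (subsetP sBA _ xB) /= => /forallP /(_ y).
by rewrite (subsetP sBA _ yB).
Qed.

Lemma id_aux a x P R : P + R = a*a + a*x -> a*a*((a+x)*x+R) = P*(a*x+R) + R*R.
Proof. move=> h.
have : (P + R) * (a*x+R) = (a*a+a*x)*(a*x+R) by rewrite h.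
nia. Qed.

Lemma turan_arith (t s x w w' : nat) :
  t.+1 <= s -> (t.+1) * w <= s * s -> w' + x * x <= w -> s * x <= w -> 1 <= x -> x <= s ->
  t <= s - x /\ t * w' <= (s - x) * (s - x).
Proof.
move=> h1 h2 h3 h4 h5 h6.
have [a sa] : exists a, s = a + x by exists (s - x); lia.
subst s.
have -> : a + x - x = a by lia.
have [R hR] : exists R, w = (a + x) * x + R.
  exists (w - (a + x) * x). rewrite subnKC //.
subst w.
have [P hP] : exists P, P + R = a*a + a*x.
  exists (a*a + a*x - R). have : (a+x)*x+R <= (a+x)*(a+x) by nia. nia.
have id := id_aux hP.
have hPt : t * ((a + x) * x + R) <= P by nia.
have hQw : w' <= a * x + R by nia.
have key : t * w' * ((a + x) * x + R) <= a * a * ((a + x) * x + R).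
  rewrite id. have : t * w' * ((a + x) * x + R) <= P * (a*x+R) by nia. nia.
split.
  case: (leqP t a) => // hta.
  exfalso. nia.
rewrite leq_pmul2r // in key. nia.
Qed.

Lemma turan n (e : rel 'I_n) : symmetric e -> irreflexive e ->
  forall t (S : {set 'I_n}), t <= #|S| -> t * W e S <= #|S| * #|S| ->
  exists I : {set 'I_n}, I \subset S /\ #|I| = t /\ independent e I.
Proof.
move=> esym eirr; elim=> [|t IH] S ht hW.
  exists set0; split; first exact: sub0set.
  split; first by rewrite cards0.
  by apply/forallP => x; rewrite in_set0.
have : 0 < #|S| by lia.
case/card_gt0P => v0 v0S.
pose v := [arg min_(v < v0 in S) #|NS e S v|].
have [vS vmin] : v \in S /\ forall u, u \in S -> #|NS e S v| <= #|NS e S u|.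
  rewrite /v; case: arg_minnP => //= u uS hu; split => // w wS; exact: hu.
set N := NS e S v.
have NsubS : N \subset S by apply/subsetP => w; rewrite inE => /andP [].
have vN : v \in N by rewrite inE vS eqxx.
set S' := S :\: N.
have cS' : #|S'| = #|S| - #|N|.
  rewrite cardsD (setIidPr NsubS) //.
have x1 : 1 <= #|N| by apply/card_gt0P; exists v.
have xs : #|N| <= #|S| by apply: subset_leq_card.
have hsx : #|S| * #|N| <= W e S.
  rewrite /W -sum_nat_const; apply: leq_sum => u uS; exact: vmin.
have hW' : W e S' + #|N| * #|N| <= W e S.
  have e1 : \sum_(u in S | u \notin N) #|NS e S u| = \sum_(u in S') #|NS e S u|.
    apply: eq_bigl => u; by rewrite /S' !inE andbC.
  have e2 : \sum_(u in S | u \in N) #|NS e S u| = \sum_(u in N) #|NS e S u|.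
    apply: eq_bigl => u; case uN: (u \in N); rewrite ?andbT ?andbF //.
    exact: (subsetP NsubS).
  rewrite /W [X in _ <= X](bigID (fun u => u \in N)) /= addnC e1 e2.
  apply: leq_add.
    rewrite -sum_nat_const.
    apply: leq_sum => u uN; apply: vmin; exact: (subsetP NsubS).
  apply: leq_sum => u _; apply: subset_leq_card; apply/subsetP => w.
  rewrite /S' !inE => /andP [/andP [wN wS] ->]; by rewrite wS.
have [ht' hW''] := turan_arith ht hW hW' hsx x1 xs.
rewrite -cS' in ht' hW''.
have [I [IS' [cI indI]]] := IH S' ht' hW''.
have vI : v \notin I by apply/negP => /(subsetP IS'); rewrite inE vN.
exists (v |: I); split.
  rewrite subUset sub1set vS /=; apply: subset_trans IS' _; exact: subsetDl.
split; first by rewrite cardsU1 vI cI.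
have nadj : forall y, y \in I -> ~~ e v y.
  move=> y /(subsetP IS'); rewrite /S' /N /NS !inE. by case: (e v y); case: (y \in S); rewrite ?orbT.
move/forallP: indI => indI.
apply/forallP => x; apply/implyP; rewrite !inE => /orP [/eqP -> | xI];
  apply/forallP => y; apply/implyP; rewrite !inE => /orP [/eqP -> | yI].
- by rewrite eirr.
- exact: nadj.
- by rewrite esym; apply: nadj.
- by move: (indI x); rewrite xI /= => /forallP /(_ y); rewrite yI.
Qed.
Lemma card_fam (aT rT : finType) (F : aT -> {set rT}) :
  #|[set f : {ffun aT -> rT} | [forall x, f x \in F x]]| = \prod_x #|F x|.
Proof.
have := card_family (fun x => mem (F x)).
rewrite foldrE big_map -big_enum /= => <-.
apply: eq_card => f; rewrite !inE. apply/forallP/familyP => h x; exact: h.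
Qed.

Lemma card_avoid n m (D : {set 'I_n * 'I_n}) :
  #|[set f : {ffun 'I_n * 'I_n -> 'I_m.+1} | [forall p in D, f p != ord0]]|
  = m ^ #|D| * m.+1 ^ (n * n - #|D|).
Proof.
have -> : [set f : {ffun 'I_n * 'I_n -> 'I_m.+1} | [forall p in D, f p != ord0]]
  = [set f : {ffun 'I_n * 'I_n -> 'I_m.+1} | [forall p, f p \in (if p \in D then [set~ ord0] else setT)]].
  apply/setP => f; rewrite !inE; apply/forallP/forallP => h p; have := h p;
  by case: (p \in D); rewrite !inE.
rewrite card_fam (bigID (fun p => p \in D)) /=.
rewrite (eq_bigr (fun _ => m)); last first.
  by move=> p ->; rewrite cardsC1 card_ord.
rewrite [X in _ * X](eq_bigr (fun _ => m.+1)); last first.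
  by move=> p /negbTE ->; rewrite cardsT card_ord.
rewrite !prod_nat_const; congr (_ * _ ^ _).
have h := cardC D; rewrite card_prod !card_ord in h.
rewrite -h addKn; apply: eq_card => p; by rewrite !inE.
Qed.

Lemma card_hit n m (Q : {set 'I_n * 'I_n}) :
  #|[set f : {ffun 'I_n * 'I_n -> 'I_m.+1} | [forall p in Q, f p == ord0]]|
  = m.+1 ^ (n * n - #|Q|).
Proof.
have -> : [set f : {ffun 'I_n * 'I_n -> 'I_m.+1} | [forall p in Q, f p == ord0]]
  = [set f : {ffun 'I_n * 'I_n -> 'I_m.+1} | [forall p, f p \in (if p \in Q then [set ord0] else setT)]].
  apply/setP => f; rewrite !inE; apply/forallP/forallP => h p; have := h p;
  by case: (p \in Q); rewrite !inE.
rewrite card_fam (bigID (fun p => p \in Q)) /=.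
rewrite (eq_bigr (fun _ => 1)); last first.
  by move=> p ->; rewrite cards1.
rewrite [X in _ * X](eq_bigr (fun _ => m.+1)); last first.
  by move=> p /negbTE ->; rewrite cardsT card_ord.
rewrite !prod_nat_const exp1n mul1n; congr (_ ^ _).
have h := cardC Q; rewrite card_prod !card_ord in h.
rewrite -h addKn; apply: eq_card => p; by rewrite !inE.
Qed.

Lemma card_in_sum (T : finType) (S : {set T}) (P : pred T) :
  #|[set w in S | P w]| = \sum_(w in S) P w.
Proof.
rewrite -sum1_card big_mkcond [RHS]big_mkcond /=.
apply: eq_bigr => w _; rewrite !inE; by case: (w \in S); case: (P w).
Qed.

Lemma card_pairs1 n (S : {set 'I_n}) (P : 'I_n -> 'I_n -> bool) :
  #|[set p : 'I_n * 'I_n | (p.1 \in S) && (p.2 \in S) && P p.1 p.2]|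
  = \sum_(u in S) #|[set w in S | P u w]|.
Proof.
rewrite -sum1_card.
under [RHS]eq_bigr => u _ do rewrite card_in_sum.
rewrite pair_big /=. rewrite big_mkcond [RHS]big_mkcond /=.
apply: eq_bigr => p _; rewrite !inE.
by case: (p.1 \in S); case: (p.2 \in S); case: (P p.1 p.2).
Qed.

Lemma card_pairs2 n (S : {set 'I_n}) (P : 'I_n -> 'I_n -> bool) :
  #|[set p : 'I_n * 'I_n | (p.1 \in S) && (p.2 \in S) && P p.1 p.2]|
  = \sum_(w in S) #|[set u in S | P u w]|.
Proof.
rewrite card_pairs1.
under eq_bigr => u _ do rewrite card_in_sum.
under [RHS]eq_bigr => u _ do rewrite card_in_sum.
exact: exchange_big.
Qed.

Definition adj n m (f : {ffun 'I_n * 'I_n -> 'I_m.+1}) : rel 'I_n :=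
  fun u w => (u != w) && ((f (u, w) == ord0) || (f (w, u) == ord0)).

Lemma adj_sym n m (f : {ffun 'I_n * 'I_n -> 'I_m.+1}) : symmetric (adj f).
Proof. by move=> u w; rewrite /adj eq_sym orbC. Qed.

Lemma adj_irr n m (f : {ffun 'I_n * 'I_n -> 'I_m.+1}) : irreflexive (adj f).
Proof. by move=> u; rewrite /adj eqxx. Qed.

Definition Off n (S : {set 'I_n}) := [set p : 'I_n * 'I_n | (p.1 \in S) && (p.2 \in S) && (p.1 != p.2)].
Definition Z0 n m (f : {ffun 'I_n * 'I_n -> 'I_m.+1}) (S : {set 'I_n}) :=
  [set p : 'I_n * 'I_n | (p.1 \in S) && (p.2 \in S) && ((p.1 != p.2) && (f p == ord0))].

Lemma card_Off n (S : {set 'I_n}) : #|Off S| = #|S| * (#|S| - 1).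
Proof.
rewrite /Off (card_pairs1 S (fun x y => x != y)) -sum_nat_const; apply: eq_bigr => u uS.
have := cardsD1 u S; rewrite uS add1n => ->; rewrite subn1 /=.
apply: eq_card => w; rewrite !inE; by rewrite andbC eq_sym.
Qed.

Lemma W_bound n m (f : {ffun 'I_n * 'I_n -> 'I_m.+1}) (S : {set 'I_n}) : W (adj f) S <= #|S| + 2 * #|Z0 f S|.
Proof.
have h1 : #|Z0 f S| = \sum_(u in S) #|[set w in S | (u != w) && (f (u, w) == ord0)]|.
  by rewrite -(card_pairs1 S (fun x y => (x != y) && (f (x, y) == ord0))); apply: eq_card => [[x y]]; rewrite !inE.
have h2 : #|Z0 f S| = \sum_(u in S) #|[set w in S | (w != u) && (f (w, u) == ord0)]|.
  by rewrite -(card_pairs2 S (fun x y => (x != y) && (f (x, y) == ord0))); apply: eq_card => [[x y]]; rewrite !inE.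
rewrite mul2n -addnn {1}h1 h2 -!big_split /= -sum1_card -big_split /=.
apply: leq_sum => u uS.
have hsub : NS (adj f) S u \subset u |: ([set w in S | (u != w) && (f (u, w) == ord0)] :|: [set w in S | (w != u) && (f (w, u) == ord0)]).
  apply/subsetP => w; rewrite !inE /adj.
  case/andP => wS /orP [-> //| /andP [uw /orP [h|h]]]; rewrite wS h ?uw ?(eq_sym w u) ?uw ?orbT //.
apply: leq_trans (subset_leq_card hsub) _.
rewrite cardsU1; apply: leq_add; first by case: (_ \notin _).
by rewrite leq_card_setU.
Qed.

Lemma card_bigcup_le (I T : finType) (P : pred I) (F : I -> {set T}) :
  #|\bigcup_(i | P i) F i| <= \sum_(i | P i) #|F i|.
Proof.
apply: (big_ind2 (fun (A : {set T}) k => #|A| <= k)).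
- by rewrite cards0.
- move=> A1 k1 A2 k2 h1 h2; apply: leq_trans (leq_card_setU A1 A2) _; exact: leq_add.
- by [].
Qed.

Lemma exists_notin (T : finType) (B : {set T}) : #|B| < #|T| -> exists x, x \notin B.
Proof.
move=> h; apply/existsP; rewrite -negb_forall; apply/negP => /forallP hall.
have : B = setT by apply/setP => x; rewrite inE; exact: hall.
by move=> eB; move: h; rewrite eB cardsT ltnn.
Qed.

Definition Avoid n m (D : {set 'I_n * 'I_n}) :=
  [set f : {ffun 'I_n * 'I_n -> 'I_m.+1} | [forall p in D, f p != ord0]].
Definition Hit n m (Q : {set 'I_n * 'I_n}) :=
  [set f : {ffun 'I_n * 'I_n -> 'I_m.+1} | [forall p in Q, f p == ord0]].

Lemma sum_draws n k c : \sum_(K : {set 'I_n} | #|K| == k) c = 'C(n, k) * c.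
Proof.
have h := card_draws 'I_n k; rewrite card_ord in h.
rewrite sum_nat_const -h; congr (_ * _).
by apply: eq_card => K; rewrite inE.
Qed.

Lemma main_count n m k s t :
  0 < t -> t <= s ->
  let M := (s * (s - t)) %/ (2 * t) + 1 in
  'C(n, k) * m ^ (k * (k - 1)) * m.+1 ^ M + 'C(n, s) * 'C(s * (s - 1), M) * m.+1 ^ (k * (k - 1))
    < m.+1 ^ (k * (k - 1)) * m.+1 ^ M ->
  exists f : {ffun 'I_n * 'I_n -> 'I_m.+1},
    (forall K : {set 'I_n}, #|K| = k -> ~~ independent (adj f) K) /\
    (forall S : {set 'I_n}, #|S| = s ->
        exists I : {set 'I_n}, I \subset S /\ #|I| = t /\ independent (adj f) I).
Proof.
move=> t0 ts M hc.
set B1 := \bigcup_(K : {set 'I_n} | #|K| == k) Avoid m (Off K).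
set B2 := \bigcup_(S : {set 'I_n} | #|S| == s)
            \bigcup_(Q : {set 'I_n * 'I_n} | (Q \subset Off S) && (#|Q| == M)) Hit m Q.
have cB1 : #|B1| <= 'C(n, k) * (m ^ (k * (k - 1)) * m.+1 ^ (n * n - k * (k - 1))).
  apply: leq_trans (card_bigcup_le _ _) _.
  rewrite (eq_bigr (fun _ => m ^ (k * (k - 1)) * m.+1 ^ (n * n - k * (k - 1)))).
    by rewrite sum_draws.
  move=> K /eqP cK; by rewrite /Avoid card_avoid card_Off cK.
have cB2 : #|B2| <= 'C(n, s) * ('C(s * (s - 1), M) * m.+1 ^ (n * n - M)).
  apply: leq_trans (card_bigcup_le _ _) _.
  rewrite -sum_draws.
  apply: leq_sum => S /eqP cS.
  apply: leq_trans (card_bigcup_le _ _) _.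
  rewrite (eq_bigr (fun _ => m.+1 ^ (n * n - M))).
    rewrite sum_nat_const; apply: leq_mul => //; apply: eq_leq.
    have h := cards_draws (Off S) M; rewrite card_Off cS in h.
    by rewrite -h; apply: eq_card => Q; rewrite inE.
  move=> Q /andP [_ /eqP cQ]; by rewrite /Hit card_hit cQ.
set K2 := k * (k - 1) in hc cB1.
set P := m.+1 ^ K2 * m.+1 ^ M.
set NN := n * n.
have hB1 : #|B1| * P <= 'C(n, k) * m ^ K2 * m.+1 ^ M * m.+1 ^ NN.
  case: (leqP k n) => hkn; last first.
    by move: cB1; rewrite bin_small // mul0n leqn0 => /eqP ->.
  have hK : K2 <= NN by rewrite /K2 /NN; apply: leq_mul => //; lia.
  apply: leq_trans (leq_mul cB1 (leqnn P)) _.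
  rewrite /P -!mulnA leq_mul2l; apply/orP; right.
  rewrite leq_mul2l; apply/orP; right.
  by rewrite mulnA -expnD subnK // mulnC.
have hB2 : #|B2| * P <= 'C(n, s) * 'C(s * (s - 1), M) * m.+1 ^ K2 * m.+1 ^ NN.
  case: (leqP M (s * (s - 1))) => hM; last first.
    by move: cB2; rewrite (bin_small hM) mul0n muln0 leqn0 => /eqP ->.
  case: (leqP s n) => hs; last first.
    by move: cB2; rewrite (bin_small hs) mul0n leqn0 => /eqP ->.
  have hMN : M <= NN by rewrite /NN; apply: leq_trans hM _; apply: leq_mul; lia.
  apply: leq_trans (leq_mul cB2 (leqnn P)) _.
  rewrite /P -!mulnA leq_mul2l; apply/orP; right.
  rewrite leq_mul2l; apply/orP; right.
  by rewrite mulnCA -expnD subnK.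
have hlt : #|B1 :|: B2| < #|{: {ffun 'I_n * 'I_n -> 'I_m.+1}}|.
  rewrite card_ffun card_prod !card_ord -/NN.
  have hP : 0 < P by rewrite /P muln_gt0 !expn_gt0.
  rewrite -(ltn_pmul2r hP).
  apply: (@leq_ltn_trans ((#|B1| + #|B2|) * P)).
    by rewrite leq_mul2r (leq_card_setU B1 B2).1 orbT.
  rewrite mulnDl.
  apply: leq_ltn_trans (leq_add hB1 hB2) _.
  rewrite -!(mulnC (m.+1 ^ NN)) -mulnDr ltn_pmul2l ?expn_gt0 //.
have [f fB] := exists_notin hlt.
rewrite inE negb_or in fB; case/andP: fB => fB1 fB2.
exists f; split.
  move=> K cK; apply/negP => indK; apply: (negP fB1).
  apply/bigcupP; exists K; first by rewrite cK.
  rewrite inE; apply/forallP => p; apply/implyP; rewrite inE => /andP [/andP [p1 p2] p12].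
  move/forallP: indK => /(_ p.1); rewrite p1 /= => /forallP /(_ p.2); rewrite p2 /= /adj p12 /=.
  by case: p p1 p2 p12 => x y /= _ _ _; rewrite negb_or; case/andP.
move=> S cS.
have hZ : #|Z0 f S| < M.
  rewrite ltnNge; apply/negP => hMZ.
  have [Q [QZ cQ]] := sub_card hMZ.
  apply: (negP fB2); apply/bigcupP; exists S; first by rewrite cS.
  apply/bigcupP; exists Q.
    rewrite cQ eqxx andbT; apply: subset_trans QZ _; apply/subsetP => p.
    by rewrite !inE => /andP [/andP [-> ->] /andP [-> _]].
  rewrite inE; apply/forallP => p; apply/implyP => /(subsetP QZ).
  by rewrite inE => /andP [_ /andP [_ ->]].
apply: turan; [exact: adj_sym | exact: adj_irr | by rewrite cS | ].
rewrite cS.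
have h1 : 2 * t * #|Z0 f S| <= s * (s - t).
  rewrite mulnC -leq_divRL ?muln_gt0 //; rewrite /M addn1 ltnS in hZ; exact: hZ.
apply: leq_trans (leq_mul (leqnn t) (W_bound f S)) _.
rewrite cS. nia.
Qed.

Lemma ffact_le_pow N j : N ^_ j <= N ^ j.
Proof.
elim: j N => [|j IH] N; first by rewrite ffactn0 expn0.
rewrite ffactnS expnS leq_mul2l; apply/orP; right.
apply: leq_trans (IH _) _; case: j {IH} => [|j] //; rewrite leq_exp2r //; lia.
Qed.

Lemma binom_fact_le N j : 'C(N, j) * j`! <= N ^ j.
Proof. rewrite bin_ffact; exact: ffact_le_pow. Qed.


From Stdlib Require Import Reals Lra ZArith.
Open Scope R_scope.

Lemma exp_pow_n x n : exp x ^ n = exp (INR n * x).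
Proof.
induction n as [|n IH]; first by rewrite /= Rmult_0_l exp_0.
rewrite -tech_pow_Rmult IH -exp_plus S_INR; f_equal; lra.
Qed.

Lemma succ_pow_le j : INR j.+1 ^ j <= exp 1 * INR j ^ j.
Proof.
destruct j as [|j]; first by simpl; have := exp_ineq1_le 1; lra.
set x := INR j.+1.
have hx : 0 < x by apply: lt_0_INR; apply/ltP.
have -> : INR j.+2 = x * (1 + / x) by rewrite S_INR -/x; field; lra.
rewrite Rpow_mult_distr Rmult_comm; apply: Rmult_le_compat_r; first by apply: pow_le; lra.
apply: Rle_trans (pow_incr _ _ _ _) _.
  split; [have := Rinv_0_lt_compat x hx; lra| exact: exp_ineq1_le].
rewrite exp_pow_n.
have -> : INR j.+1 * / x = 1 by rewrite -/x; field; lra.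
lra.
Qed.

Lemma INR_muln a b : INR (muln a b) = INR a * INR b.
Proof. exact: mult_INR. Qed.
Lemma INR_expn a b : INR (expn a b) = INR a ^ b.
Proof. rewrite -pow_INR; congr INR; elim: b => [|b IH] //; by rewrite expnS IH. Qed.
Lemma INR_addn a b : INR (addn a b) = INR a + INR b.
Proof. exact: plus_INR. Qed.

Lemma fact_bound j : INR j ^ j <= exp 1 ^ j * INR (j`!).
Proof.
elim: j => [|j IH]; first by rewrite /=; lra.
rewrite factS INR_muln -tech_pow_Rmult -tech_pow_Rmult.
have h1 := succ_pow_le j.
have h2 : 0 <= INR j.+1 by apply: pos_INR.
have he : 0 < exp 1 by apply: exp_pos.
apply: Rle_trans (Rmult_le_compat_l _ _ _ h2 h1) _.
rewrite -Rmult_assoc (Rmult_comm (INR j.+1)) !Rmult_assoc; apply: Rmult_le_compat_l; first lra.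
rewrite (Rmult_comm (exp 1 ^ j)) Rmult_assoc; apply: Rmult_le_compat_l => //.
by rewrite Rmult_comm.
Qed.

Lemma binom_bound N j : INR ('C(N, j)) * INR j ^ j <= exp 1 ^ j * INR N ^ j.
Proof.
have h := binom_fact_le N j.
have h' : INR ('C(N, j)) * INR (j`!) <= INR N ^ j.
  rewrite -INR_muln -INR_expn; apply: le_INR; apply/leP; exact: h.
have hC : 0 <= INR ('C(N, j)) by apply: pos_INR.
apply: Rle_trans (Rmult_le_compat_l _ _ _ hC (fact_bound j)) _.
rewrite (Rmult_comm (exp 1 ^ j)) -Rmult_assoc Rmult_comm.
apply: Rmult_le_compat_l => //; apply: pow_le; have := exp_pos 1; lra.
Qed.

Lemma pow_le_decr x m n : 0 <= x <= 1 -> (m <= n)%coq_nat -> x ^ n <= x ^ m.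
Proof.
move=> hx hmn.
have -> : n = (m + (n - m))%coq_nat by lia.
rewrite pow_add.
have h2 : 0 <= x ^ m by apply: pow_le; lra.
rewrite -{2}(Rmult_1_r (x ^ m)); apply: Rmult_le_compat_l => //.
rewrite -(pow1 (n - m)); apply: pow_incr; lra.
Qed.

Lemma pow_lt_l x y n : 0 <= x < y -> (0 < n)%coq_nat -> x ^ n < y ^ n.
Proof.
move=> hxy; elim: n => [|n IH] hn; first by lia.
rewrite -!tech_pow_Rmult.
case: n IH hn => [|n] IH hn; first by rewrite /=; lra.
have := IH ltac:(lia).
have : 0 <= x ^ n.+1 by apply: pow_le; lra.
nra.
Qed.

Lemma exists_nat_above y : 0 <= y -> exists q : nat, y < INR q /\ INR q <= y + 1.
Proof.
move=> hy; have [h1 h2] := archimed y.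
exists (Z.to_nat (up y)).
rewrite INR_IZR_INZ Z2Nat.id; first lra.
apply: le_IZR; lra.
Qed.

Lemma eventA n t k m :
  (1 <= t)%coq_nat -> (t <= k)%coq_nat -> (t <= n)%coq_nat -> (1 <= m)%coq_nat ->
  INR m.+1 * (ln (INR n / INR t) + 2) <= INR k - 1 ->
  INR ('C(n, k)) * (INR m / INR m.+1) ^ (k * (k - 1)) < 1 / 2.
Proof.
move=> ht htk htn hm hk.
have tpos : 0 < INR t by apply: lt_0_INR; lia.
have npos : 0 < INR n by apply: lt_0_INR; lia.
have kpos : 0 < INR k by apply: lt_0_INR; lia.
have mpos : 0 < INR m by apply: lt_0_INR; lia.
have Bpos : 0 < INR m.+1 by apply: lt_0_INR; lia.
have hB : INR m.+1 = INR m + 1 by rewrite S_INR.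
set L := ln (INR n / INR t) in hk.
have hL : exp L = INR n / INR t by rewrite /L exp_ln //; apply: Rdiv_lt_0_compat.
have hC : INR ('C(n, k)) <= exp (INR k * (1 + L)).
  have hb := binom_bound n k.
  have htk' : INR t ^ k <= INR k ^ k by apply: pow_incr; split; [lra| apply: le_INR].
  have hC0 : 0 <= INR ('C(n, k)) by apply: pos_INR.
  have h1 : INR ('C(n, k)) * INR t ^ k <= exp 1 ^ k * INR n ^ k.
    apply: Rle_trans hb; apply: Rmult_le_compat_l => //.
  rewrite -exp_pow_n exp_plus hL Rpow_mult_distr.
  have htk0 : 0 < INR t ^ k by apply: pow_lt.
  apply: (Rmult_le_reg_r (INR t ^ k)) => //.
  apply: Rle_trans h1 _; right.
  rewrite /Rdiv Rpow_mult_distr pow_inv. field. apply: pow_nonzero; lra.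
have hq0 : 0 <= INR m / INR m.+1 by apply: Rmult_le_pos; [lra| left; apply: Rinv_0_lt_compat; lra].
have hq : INR m / INR m.+1 <= exp (- / INR m.+1).
  apply: Rle_trans (exp_ineq1_le _); right; rewrite hB. field; lra.
have hQ : (INR m / INR m.+1) ^ (k * (k - 1)) <= exp (- (INR k * (INR k - 1)) / INR m.+1).
  apply: Rle_trans (pow_incr _ _ _ (conj hq0 hq)) _.
  rewrite exp_pow_n; right; congr exp.
  rewrite mult_INR minus_INR; last by lia.
  rewrite hB /=; field; lra.
have hCnn : 0 <= INR ('C(n, k)) by apply: pos_INR.
have hQ0 : 0 <= (INR m / INR m.+1) ^ (k * (k - 1)) by apply: pow_le.
apply: Rle_lt_trans (Rmult_le_compat _ _ _ _ hCnn hQ0 hC hQ) _.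
rewrite -exp_plus.
have hex : - (INR k * (INR k - 1)) / INR m.+1 <= - (INR k * (L + 2)).
  have : INR k * (INR m.+1 * (L + 2)) <= INR k * (INR k - 1) by apply: Rmult_le_compat_l; lra.
  move=> h. apply: (Rmult_le_reg_r (INR m.+1)) => //.
  have -> : - (INR k * (INR k - 1)) / INR m.+1 * INR m.+1 = - (INR k * (INR k - 1)) by field; lra.
  nra.
have he1 : exp (INR k * (1 + L) + - (INR k * (INR k - 1)) / INR m.+1) <= exp (-1).
  destruct (Req_dec (INR k * (1 + L) + - (INR k * (INR k - 1)) / INR m.+1) (-1)) as [e|e].
    by rewrite e; lra.
  left; apply: exp_increasing.
  have : 1 <= INR k by apply: (le_INR 1); lia.
  lra.
apply: Rle_lt_trans he1 _.
have := exp_ineq1 1 ltac:(lra).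
rewrite exp_Ropp. move=> h.
apply: (Rmult_lt_reg_l (exp 1)); first by apply: exp_pos.
rewrite Rinv_r; last by have := exp_pos 1; lra.
lra.
Qed.

Lemma eventB n t s m M :
  (1 <= t)%coq_nat -> (2 * t <= s)%coq_nat -> (s <= n)%coq_nat ->
  (s * (s - t) <= M * (2 * t))%coq_nat ->
  8 * exp 1 * INR t * Rpower (exp 1 * (INR n / INR s)) (2 * INR t / (INR s - INR t)) <= INR m.+1 ->
  INR ('C(n, s)) * INR ('C(s * (s - 1), M)) / INR m.+1 ^ M <= 1 / 2.
Proof.
move=> ht hts hsn hM hB.
have e1 : 1 <= exp 1 by have := exp_ineq1_le 1; lra.
have tpos : 1 <= INR t by apply: (le_INR 1).
have hst : 2 * INR t <= INR s by rewrite -(INR_IZR_INZ 2) -mult_INR; apply: le_INR.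
have spos : 0 < INR s by lra.
have hsn' : INR s <= INR n by apply: le_INR.
have npos : 0 < INR n by lra.
set E := exp 1 * (INR n / INR s).
have hr : 1 <= INR n / INR s.
  apply: (Rmult_le_reg_r (INR s)) => //; rewrite Rmult_1_l /Rdiv Rmult_assoc Rinv_l; lra.
have hE : 1 <= E by rewrite /E; nra.
set a := 2 * INR t / (INR s - INR t).
have ha : 0 <= a by rewrite /a; apply: Rmult_le_pos; [lra| left; apply: Rinv_0_lt_compat; lra].
set P := Rpower E a.
have hP : 1 <= P by rewrite /P -(Rpower_O E); [apply: Rle_Rpower | ]; lra.
set B := INR m.+1.
have Bpos : 0 < B by apply: lt_0_INR; lia.
set rho := 4 * exp 1 * INR t / B.
have rho_pos : 0 < rho by rewrite /rho; apply: Rmult_lt_0_compat; [nra| apply: Rinv_0_lt_compat].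
have rho_le : rho <= / (2 * P).
  rewrite /rho; apply: (Rmult_le_reg_r B) => //.
  have -> : 4 * exp 1 * INR t / B * B = 4 * exp 1 * INR t by field; lra.
  apply: (Rmult_le_reg_l (2 * P)); first lra.
  have -> : 2 * P * (/ (2 * P) * B) = B by field; lra.
  have -> : 2 * P * (4 * exp 1 * INR t) = 8 * exp 1 * INR t * P by ring.
  exact: hB.
have rho1 : rho <= 1 / 2.
  apply: Rle_trans rho_le _; rewrite /Rdiv Rmult_1_l; apply: Rinv_le_contravar; lra.
have Mpos : (0 < M)%coq_nat.
  case: M hM => [|M] hM; last by lia.
  have : (1 <= s - t)%coq_nat by lia.
  move=> h; have : (1 <= s * (s - t))%coq_nat by nia.
  lia.
have Mpos' : 0 < INR M by apply: lt_0_INR.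
have hMr : INR s * (INR s - INR t) <= INR M * (2 * INR t).
  have := le_INR _ _ hM; rewrite !mult_INR minus_INR; last by lia.
  by rewrite -(INR_IZR_INZ 2).
have hC1 : INR ('C(n, s)) <= E ^ s.
  have hb := binom_bound n s.
  have hs0 : 0 < INR s ^ s by apply: pow_lt.
  apply: (Rmult_le_reg_r (INR s ^ s)) => //.
  apply: Rle_trans hb _; right.
  rewrite /E Rpow_mult_distr /Rdiv Rpow_mult_distr pow_inv. field; apply: pow_nonzero; lra.
have hC2 : INR ('C(s * (s - 1), M)) / B ^ M <= rho ^ M.
  have hb := binom_bound (s * (s - 1)) M.
  have hM0 : 0 < INR M ^ M by apply: pow_lt.
  have hBM : 0 < B ^ M by apply: pow_lt.
  have hss : INR (s * (s - 1)) <= INR s * INR s.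
    rewrite mult_INR; apply: Rmult_le_compat_l; first lra.
    apply: le_INR; lia.
  have hss0 : 0 <= INR (s * (s - 1)) by apply: pos_INR.
  have hkey : exp 1 * (INR s * INR s) <= rho * (INR M * B).
    rewrite /rho.
    have -> : 4 * exp 1 * INR t / B * (INR M * B) = exp 1 * (4 * INR t * INR M) by field; lra.
    apply: Rmult_le_compat_l; first lra. nra.
  apply: (Rmult_le_reg_r (B ^ M)) => //.
  apply: (Rmult_le_reg_r (INR M ^ M)) => //.
  have -> : INR ('C(s * (s - 1), M)) / B ^ M * B ^ M * INR M ^ M
            = INR ('C(s * (s - 1), M)) * INR M ^ M by field; lra.
  apply: Rle_trans hb _.
  rewrite -!Rpow_mult_distr.
  apply: pow_incr; split.
    apply: Rmult_le_pos; lra.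
  have -> : rho * B * INR M = rho * (INR M * B) by ring.
  apply: Rle_trans hkey; apply: Rmult_le_compat_l; lra.
set T := E ^ s * rho ^ M.
have hT0 : 0 <= T by rewrite /T; apply: Rmult_le_pos; apply: pow_le; lra.
have hterm : INR ('C(n, s)) * INR ('C(s * (s - 1), M)) / B ^ M <= T.
  rewrite /Rdiv Rmult_assoc; apply: Rmult_le_compat => //.
  - by apply: pos_INR.
  - apply: Rmult_le_pos; [apply: pos_INR| left; apply: Rinv_0_lt_compat; apply: pow_lt; lra].
have hPst : P ^ (s - t) = E ^ (2 * t).
  rewrite -Rpower_pow; last by lra.
  rewrite /P.
  rewrite Rpower_mult -(Rpower_pow (2 * t)); last lra.
  congr Rpower.
  rewrite minus_INR; last by lia.
  rewrite mult_INR /a -(INR_IZR_INZ 2) /=. field; lra.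
have hE0 : 0 <= E ^ (2 * t) by apply: pow_le; lra.
have hX : E ^ (2 * t) * rho ^ (s - t) <= 1 / 2.
  have h1 : rho ^ (s - t) <= (/ (2 * P)) ^ (s - t) by apply: pow_incr; lra.
  have h2 : (/ (2 * P)) ^ (s - t) = (1 / 2) ^ (s - t) * / E ^ (2 * t).
    rewrite -hPst -pow_inv -Rpow_mult_distr; congr (_ ^ _); field; lra.
  have h3 : (1 / 2) ^ (s - t) <= (1 / 2) ^ 1 by apply: pow_le_decr; [lra| lia].
  have hEp : 0 < E ^ (2 * t) by apply: pow_lt; lra.
  apply: Rle_trans (Rmult_le_compat_l _ _ _ hE0 h1) _.
  rewrite h2 Rmult_comm Rmult_assoc Rinv_l; last lra.
  rewrite Rmult_1_r; apply: Rle_trans h3 _; simpl; lra.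
have hX0 : 0 <= E ^ (2 * t) * rho ^ (s - t) by apply: Rmult_le_pos => //; apply: pow_le; lra.
have hT2 : T ^ (2 * t) <= (1 / 2) ^ (2 * t).
  rewrite /T Rpow_mult_distr -!pow_mult.
  have h1 : rho ^ (M * (2 * t)) <= rho ^ (s * (s - t)) by apply: pow_le_decr; [lra| exact: hM].
  have hEs : 0 <= E ^ (s * (2 * t)) by apply: pow_le; lra.
  apply: Rle_trans (Rmult_le_compat_l _ _ _ hEs h1) _.
  rewrite (mulnC s) (mulnC s) [E ^ _]pow_mult [rho ^ _]pow_mult -Rpow_mult_distr.
  apply: Rle_trans (pow_incr _ _ s (conj hX0 hX)) _.
  apply: pow_le_decr; [lra| lia].
have hT : T <= 1 / 2.
  case: (Rle_lt_dec T (1 / 2)) => // hlt; exfalso.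
  move: hT2; apply: Rlt_not_le; apply: pow_lt_l; [lra| lia].
exact: Rle_trans hterm hT.
Qed.

Close Scope R_scope.

Theorem theorem2p3 :
  exists C : R, (0 < C)%R /\
  exists t0 : nat, exists N0 : nat,
  forall n t s : nat,
    N0 <= n -> t0 <= t -> 2 * t <= s -> 2 * s <= n ->
    exists e : rel 'I_n,
      simple_graph e /\
      (INR (alpha e) <=
         C * INR t
           * Rpower (INR n / INR s) (2 * INR t / (INR s - INR t))
           * ln (INR n / INR t))%R /\
      forall S : {set 'I_n}, #|S| = s ->
        exists I : {set 'I_n}, I \subset S /\ #|I| = t /\ independent e I.
Proof.
exists 1000%R; split; first lra.
exists 1%nat, 0%nat => n t s _ ht hts hsn.
move/leP: ht => ht; move/leP: hts => hts; move/leP: hsn => hsn.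
have tpos : (1 <= INR t)%R by apply: (le_INR 1).
have hts' : (2 * INR t <= INR s)%R by rewrite -(INR_IZR_INZ 2) -mult_INR; apply: le_INR.
have hsn' : (2 * INR s <= INR n)%R by rewrite -(INR_IZR_INZ 2) -mult_INR; apply: le_INR.
have e1 : (1 <= exp 1)%R by have := exp_ineq1_le 1; lra.
have e3 := exp_le_3.
set r := (INR n / INR s)%R.
have hr : (1 <= r)%R.
  rewrite /r; apply: (Rmult_le_reg_r (INR s)); first lra.
  rewrite Rmult_1_l /Rdiv Rmult_assoc Rinv_l; lra.
set a := (2 * INR t / (INR s - INR t))%R.
have ha : (0 <= a)%R by rewrite /a; apply: Rmult_le_pos; [lra| left; apply: Rinv_0_lt_compat; lra].
have ha2 : (a <= 2)%R.
  rewrite /a; apply: (Rmult_le_reg_r (INR s - INR t)); first lra.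
  rewrite /Rdiv Rmult_assoc Rinv_l; lra.
set L := ln (INR n / INR t).
have hL : (1 <= L)%R.
  rewrite /L -(ln_exp 1); left; apply: ln_increasing; first by apply: exp_pos.
  apply: (Rmult_lt_reg_r (INR t)); first lra.
  rewrite /Rdiv Rmult_assoc Rinv_l; nra.
set Rp := Rpower r a.
have hRp : (1 <= Rp)%R by rewrite /Rp -(Rpower_O r); [apply: Rle_Rpower | ]; lra.
set X := (8 * exp 1 * INR t * Rpower (exp 1 * r) a)%R.
have hXe : (X = 8 * exp 1 * INR t * exp a * Rp)%R.
  rewrite /X /Rp -Rpower_mult_distr; try lra.
  rewrite /Rpower ln_exp Rmult_1_r; ring.
have hea : (exp a <= 9)%R.
  apply: Rle_trans (_ : exp 2 <= 9)%R.
    case: (Req_dec a 2) => [->|hne]; first lra.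
    left; apply: exp_increasing; lra.
  have -> : (2 = 1 + 1)%R by lra.
  rewrite exp_plus; have := exp_pos 1; nra.
have hea0 : (0 < exp a)%R by apply: exp_pos.
have hea1 : (1 <= exp a)%R by have := exp_ineq1_le a; lra.
have h1 : (1 <= exp 1 * INR t)%R by nra.
have h2 : (1 <= exp 1 * INR t * exp a)%R by nra.
have h3 : (1 <= exp 1 * INR t * exp a * Rp)%R by nra.
have hX0 : (8 <= X)%R.
  rewrite hXe; have -> : (8 * exp 1 * INR t * exp a * Rp = 8 * (exp 1 * INR t * exp a * Rp))%R by ring.
  lra.
have h4 : (exp 1 * exp a <= 27)%R by have := exp_pos 1; nra.
have hX1 : (X <= 216 * (INR t * Rp))%R.
  rewrite hXe; have -> : (8 * exp 1 * INR t * exp a * Rp = 8 * (exp 1 * exp a) * (INR t * Rp))%R by ring.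
  have : (0 <= INR t * Rp)%R by nra.
  nra.
have [q [hq1 hq2]] := exists_nat_above (ltac:(lra) : (0 <= X)%R).
have q2 : (2 <= q)%coq_nat.
  have : (INR 1 < INR q)%R by rewrite /=; lra.
  move/INR_lt; lia.
set y := (INR q * (L + 2))%R.
have hy0 : (0 <= y)%R by rewrite /y; apply: Rmult_le_pos; [apply: pos_INR| lra].
have [q' [hq'1 hq'2]] := exists_nat_above hy0.
set m := q.-1.
have hmq : m.+1 = q by rewrite /m; lia.
set k := q'.+1.
set M := addn (divn (s * (s - t)) (2 * t)) 1.
have hkm1 : (INR k - 1 = INR q')%R by rewrite /k S_INR; lra.
have htk : (t <= k)%coq_nat.
  apply: INR_le; rewrite /k S_INR.
  have : (INR t <= y)%R by rewrite /y; nra.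
  lra.
have hA : (INR ('C(n, k)) * (INR m / INR m.+1) ^ (k * (k - 1)) < 1 / 2)%R.
  apply: (@eventA n t k m); try lia.
  rewrite hmq hkm1 -/L; move: hq'1; rewrite /y; lra.
have hMle : (s * (s - t) <= M * (2 * t))%coq_nat.
  apply/leP; rewrite /M addn1; apply: ltnW; apply: ltn_ceil; rewrite muln_gt0 /=; apply/ltP; lia.
have hB := @eventB n t s m M ltac:(lia) ltac:(lia) ltac:(lia) hMle ltac:(rewrite hmq -/r -/a -/X; lra).
have hc : ('C(n, k) * expn m (k * (k - 1)) * expn m.+1 M
   + 'C(n, s) * 'C(s * (s - 1), M) * expn m.+1 (k * (k - 1))
   < expn m.+1 (k * (k - 1)) * expn m.+1 M)%nat.
  apply/ltP; apply: INR_lt.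
  rewrite !(INR_addn, INR_muln, INR_expn).
  have hp : (0 < INR m.+1)%R by apply: lt_0_INR; lia.
  move: hA hB; rewrite /Rdiv Rpow_mult_distr pow_inv.
  set u := (INR m.+1 ^ (k * (k - 1)))%R.
  set v := (INR m.+1 ^ M)%R.
  set w := (INR m ^ (k * (k - 1)))%R.
  set c1 := INR 'C(n, k); set c2 := INR 'C(n, s); set c3 := INR 'C(s * (s - 1), M).
  move=> hA hB.
  have hu : (0 < u)%R by apply: pow_lt.
  have hv : (0 < v)%R by apply: pow_lt.
  have hA' : (c1 * w < u / 2)%R.
    have := Rmult_lt_compat_r u _ _ hu hA.
    have -> : (c1 * (w * / u) * u = c1 * w)%R by field; lra.
    lra.
  have hB' : (c2 * c3 <= v / 2)%R.
    have := Rmult_le_compat_r v _ _ (ltac:(lra) : (0 <= v)%R) hB.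
    have -> : (c2 * c3 * / v * v = c2 * c3)%R by field; lra.
    lra.
  nra.
have [f [fA fB]] := @main_count n m k s t ltac:(apply/ltP; lia) ltac:(apply/leP; lia) hc.
exists (adj f); split; first by split; [exact: adj_sym | exact: adj_irr].
split; last exact: fB.
have hal : leq (alpha (adj f)) q'.
  apply/bigmax_leqP => A indA; rewrite leqNgt; apply/negP => hA'.
  have [K [KA cK]] := sub_card hA'.
  by move: (fA K cK); rewrite (indep_sub KA indA).
have hal' : (INR (alpha (adj f)) <= INR q')%R by apply: le_INR; apply/leP.
apply: Rle_trans hal' _.
have hY : (1 <= INR t * Rp)%R by nra.
have hq217 : (INR q <= 217 * (INR t * Rp))%R by lra.
have hy' : (INR q' <= INR q * (L + 2) + 1)%R by move: hq'2; rewrite /y.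
have h5 : (INR q * (L + 2) <= 217 * (INR t * Rp) * (L + 2))%R.
  apply: Rmult_le_compat_r; lra.
have h6 : (INR t * Rp * (L + 2) <= 3 * (INR t * Rp * L))%R by nra.
have h7 : (1 <= INR t * Rp * L)%R by nra.
rewrite -/r -/a -/Rp -/L.
have -> : (1000 * INR t * Rp * L = 1000 * (INR t * Rp * L))%R by ring.
lra.
Qed.
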